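(* Consider an elementary cube of $\mathbb Z^3$ with black base vertex $n$ and black fields $x=x(n)$, $x_{12},x_{23},x_{31}$ (at $n+e_1+e_2$, $n+e_2+e_3$, $n+e_3+e_1$). For each cyclic permutation $(i,j,k)$ of $(1,2,3)$ let $a^{ij},b^{ij},c^{ij},a^{ij}_k,b^{ij}_k,c^{ij}_k$ be nonzero complex numbers with $$b^{ij}c^{ij}=(a^{ij})^2,\qquad b^{ij}_kc^{ij}_k=(a^{ij}_k)^2,$$ and $b^{12}+b^{23}+b^{31}\neq0$. Let $$S^{123}=\sum_{(i,j,k)}\Big(\tfrac12(b^{ij}_kx_{jk}^2+c^{ij}_kx_{ki}^2)-a^{ij}_kx_{jk}x_{ki}-\tfrac12(b^{ij}x^2+c^{ij}x_{ij}^2)+a^{ij}xx_{ij}\Big),$$ summed over the three cyclic permutations. Then the four linear corner equations $\partial S^{123}/\partial x=0$, $\partial S^{123}/\partial x_{12}=0$, $\partial S^{123}/\partial x_{23}=0$, $\partial S^{123}/\partial x_{31}=0$ have rank 1 (are all proportional) if and only if $$a^{12}_3=\frac{a^{23}a^{31}}{\Sigma},\ a^{23}_1=\frac{a^{31}a^{12}}{\Sigma},\ a^{31}_2=\frac{a^{12}a^{23}}{\Sigma},$$ $$b^{12}_3=\frac{c^{23}b^{31}}{\Sigma},\ b^{23}_1=\frac{c^{31}b^{12}}{\Sigma},\ b^{31}_2=\frac{c^{12}b^{23}}{\Sigma},\qquad c^{12}_3=\frac{b^{23}c^{31}}{\Sigma},\ c^{23}_1=\frac{b^{31}c^{12}}{\Sigma},\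 c^{31}_2=\frac{b^{12}c^{23}}{\Sigma},$$ where $\Sigma=b^{12}+b^{23}+b^{31}$.
   Context: $S^{123}$ is the action over the boundary of the cube of the discrete 2-form $\mathcal L(\sigma^{ij})=\frac12(b^{ij}x^2+c^{ij}x_{ij}^2)-a^{ij}xx_{ij}$ on the three plaquettes at $n$ and $\mathcal L(\sigma^{ij}_k)=\frac12(b^{ij}_kx_{jk}^2+c^{ij}_kx_{ki}^2)-a^{ij}_kx_{jk}x_{ki}$ on the opposite plaquettes (whose black vertices are $n+e_j+e_k$ and $n+e_k+e_i$); the conditions $bc=a^2$ say each of these quadratic forms is a complete square. Rank 1 of the corner system is the paper's notion of consistency (forming a pluri-Lagrangian system). *)

(* Defs.v *)
From HB Require Import structures.
From mathcomp Require Import all_boot all_order all_algebra.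
From mathcomp Require Import reals complex.
From mathcomp Require Import mpoly.
Set Implicit Arguments. Unset Strict Implicit. Unset Printing Implicit Defensive.
Import Order.TTheory GRing.Theory Num.Theory.
Local Open Scope ring_scope.

Definition vx  (F : fieldType) : {mpoly F[4]} := 'X_(inord 0).
Definition vx12 (F : fieldType) : {mpoly F[4]} := 'X_(inord 1).
Definition vx23 (F : fieldType) : {mpoly F[4]} := 'X_(inord 2).
Definition vx31 (F : fieldType) : {mpoly F[4]} := 'X_(inord 3).

Definition plaq (F : fieldType) (a b c : F) (u v : {mpoly F[4]}) : {mpoly F[4]} :=
  (2%:R)^-1 *: (b *: u ^+ 2 + c *: v ^+ 2) - a *: (u * v).

Definition S123 (F : fieldType)
  (a12 a23 a31 b12 b23 b31 c12 c23 c31 : F)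
  (a12_3 a23_1 a31_2 b12_3 b23_1 b31_2 c12_3 c23_1 c31_2 : F) : {mpoly F[4]} :=
    (plaq a12_3 b12_3 c12_3 (vx23 F) (vx31 F) - plaq a12 b12 c12 (vx F) (vx12 F))
  + (plaq a23_1 b23_1 c23_1 (vx31 F) (vx12 F) - plaq a23 b23 c23 (vx F) (vx23 F))
  + (plaq a31_2 b31_2 c31_2 (vx12 F) (vx23 F) - plaq a31 b31 c31 (vx F) (vx31 F)).

(* Coefficient matrix of the system of corner equations dS/dx_r = 0
   (r = 0..3): row r lists the coefficients of the linear polynomial
   dS/dx_r on the variables x_0, ..., x_3. *)
Definition corner_matrix (F : fieldType) (S : {mpoly F[4]}) : 'M[F]_4 :=
  \matrix_(r < 4, s < 4) (mderiv r S)@_(U_(s))%MM.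

(* Main.v *)
Require Import Defs.
From HB Require Import structures.
From mathcomp Require Import all_boot all_order all_algebra.
From mathcomp Require Import reals complex.
From mathcomp Require Import mpoly.
From mathcomp Require Import ring.
Import Order.TTheory GRing.Theory Num.Theory.
Local Open Scope ring_scope.

Section S.
Variable F : fieldType.

Lemma mderivXU (r j : 'I_4) : mderiv r ('X_j : {mpoly F[4]}) = ((j == r)%:R)%:MP.
Proof.
rewrite mderivX mnm1E; case: eqP => [->|_].
  have -> : (U_(r) - U_(r) = 0)%MM by apply/mnmP=> k; rewrite mnmBE mnm0E subnn.
  by rewrite mpolyX0 scale1r.
by rewrite scale0r.
Qed.

Lemma coefXX (r s i j : 'I_4) :
  (mderiv r ('X_i * 'X_j : {mpoly F[4]}))@_U_(s) =
  (i == r)%:R * (j == s)%:R + (j == r)%:R * (i == s)%:R.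
Proof.
rewrite mderivM !mderivXU mcoeffD mcoeffCM [_ * _%:MP]mulrC mcoeffCM !mcoeffXU.
by [].
Qed.

Lemma coef_plaq (a b c : F) (i j r s : 'I_4) :
  (mderiv r (plaq a b c 'X_i 'X_j))@_U_(s) =
  2^-1 * (b * ((i == r)%:R * (i == s)%:R + (i == r)%:R * (i == s)%:R)
        + c * ((j == r)%:R * (j == s)%:R + (j == r)%:R * (j == s)%:R))
  - a * ((i == r)%:R * (j == s)%:R + (j == r)%:R * (i == s)%:R).
Proof.
by rewrite /plaq mderivB !mderivZ mderivD !mderivZ !expr2 mcoeffB !mcoeffZ mcoeffD !mcoeffZ !coefXX.
Qed.

Lemma eqinord (k l : nat) : (k < 4)%N -> (l < 4)%N -> (inord k == inord l :> 'I_4) = (k == l).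
Proof. by move=> hk hl; rewrite -val_eqE /= !inordK. Qed.

End S.
Lemma lin6 (F : fieldType) (r s : 'I_4) (p1 p2 p3 p4 p5 p6 : {mpoly F[4]}) :
  (mderiv r ((p1 - p2) + (p3 - p4) + (p5 - p6)))@_U_(s) =
  ((mderiv r p1)@_U_(s) - (mderiv r p2)@_U_(s)) + ((mderiv r p3)@_U_(s) - (mderiv r p4)@_U_(s))
  + ((mderiv r p5)@_U_(s) - (mderiv r p6)@_U_(s)).
Proof. by rewrite !mderivD !mderivN !mcoeffD !mcoeffN. Qed.

Lemma entryE (F : fieldType)
  (a12 a23 a31 b12 b23 b31 c12 c23 c31 : F)
  (a12_3 a23_1 a31_2 b12_3 b23_1 b31_2 c12_3 c23_1 c31_2 : F) k l :
  (k < 4)%N -> (l < 4)%N ->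
  corner_matrix
           (S123 a12 a23 a31 b12 b23 b31 c12 c23 c31
                 a12_3 a23_1 a31_2 b12_3 b23_1 b31_2 c12_3 c23_1 c31_2) (inord k) (inord l) =
  let t (u v : nat) := (u == v)%:R : F in
  let r := k in let s := l in
  let P a b c (i j : nat) := 2^-1 * (b * (t i r * t i s + t i r * t i s)
        + c * (t j r * t j s + t j r * t j s))
  - a * (t i r * t j s + t j r * t i s) in
  (P a12_3 b12_3 c12_3 2 3 - P a12 b12 c12 0 1)
  + (P a23_1 b23_1 c23_1 3 1 - P a23 b23 c23 0 2)
  + (P a31_2 b31_2 c31_2 1 2 - P a31 b31 c31 0 3).
Proof.
move=> hk hl.
rewrite /corner_matrix mxE /S123 /vx /vx12 /vx23 /vx31.
rewrite lin6 !coef_plaq !eqinord //.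
Qed.
Lemma rank1P (F : fieldType) n (H : 'M[F]_n.+1) : H ord0 ord0 != 0 ->
  (\rank H = 1%N) <-> (forall i j, H i j * H ord0 ord0 = H i ord0 * H ord0 j).
Proof.
move=> h0; split.
- move=> hr i j.
  have r0 : \rank (row ord0 H) = 1%N.
    rewrite rank_rV; case: eqP => // /matrixP/(_ ord0 ord0); rewrite !mxE => e.
    by rewrite e eqxx in h0.
  have sub : (H <= row ord0 H)%MS.
    have [_ e] := mxrank_leqif_sup (row_sub ord0 H).
    by rewrite -e hr r0.
  have /sub_rVP [a ha] : (row i H <= row ord0 H)%MS := submx_trans (row_sub i H) sub.
  have := congr1 (fun M : 'rV[F]_n.+1 => M ord0 j) ha; have := congr1 (fun M : 'rV[F]_n.+1 => M ord0 ord0) ha.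
  rewrite !mxE => -> ->; ring.
- move=> h.
  have eH : H = (H ord0 ord0)^-1 *: (col ord0 H *m row ord0 H).
    by apply/matrixP=> i j; rewrite !mxE big_ord1 !mxE -h; field.
  apply/eqP; rewrite eqn_leq; apply/andP; split.
    rewrite eH; apply: leq_trans (mxrank_scale _ _) _.
    exact: leq_trans (mxrankM_maxl _ _) (rank_leq_col _).
  rewrite lt0n mxrank_eq0; apply/eqP => /matrixP/(_ ord0 ord0); rewrite mxE => e.
  by rewrite e eqxx in h0.
Qed.
Lemma from_diff (F : comRingType) (k x y u v : F) : u = v -> x - y = k * (u - v) -> x = y.
Proof. by move=> -> /eqP; rewrite subrr mulr0 subr_eq0 => /eqP. Qed.

Lemma key (F : fieldType) (P Q R S V W B1 B2 B3 C1 C2 C3 : F) :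
 B1 != 0 -> B2 != 0 -> B3 != 0 -> B1 + B2 + B3 != 0 -> C1 != 0 -> C2 != 0 -> C3 != 0 ->
 P + Q = C1 * (B2 + B3) -> R + S = C3 * (B1 + B2) -> W + V = C2 * (B1 + B3) ->
 R * P = B1 * C1 * B3 * C3 -> Q * V = B1 * C1 * B2 * C2 -> W * S = B2 * C2 * B3 * C3 ->
 P = B3 * C1 /\ Q = B2 * C1 /\ R = B1 * C3 /\ S = B2 * C3 /\ V = B1 * C2 /\ W = B3 * C2.
Proof.
move=> n1 n2 n3 nS m1 m2 m3 hPQ hRS hWV hRP hQV hWS.
have eQ : Q = C1 * (B2 + B3) - P by rewrite -hPQ; ring.
have eS : S = C3 * (B1 + B2) - R by rewrite -hRS; ring.
have eW : W = C2 * (B1 + B3) - V by rewrite -hWV; ring.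
have eSP : S * P = C3 * (B1 + B2) * P - B1 * C1 * B3 * C3 by rewrite -hRP eS; ring.
have eWQ : W * Q = C2 * (B1 + B3) * Q - B1 * C1 * B2 * C2 by rewrite -hQV eW; ring.
have E0 : (S * P) * (W * Q) - (W * S) * (P * Q) = 0 by ring.
rewrite eSP eWQ hWS eQ in E0.
have E1 : (P - B3 * C1) ^+ 2 * (B1 * (B1 + B2 + B3) * C2 * C3) = 0.
  by apply: (@from_diff _ (-1) _ _ _ _ E0); ring.
have nK : B1 * (B1 + B2 + B3) * C2 * C3 != 0 by rewrite !mulf_neq0.
move/eqP: E1; rewrite mulf_eq0 (negbTE nK) orbF expf_eq0 /= subr_eq0 => /eqP eP.
have nP : P != 0 by rewrite eP mulf_neq0.
have eQ' : Q = B2 * C1 by rewrite eQ eP; ring.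
have nQ : Q != 0 by rewrite eQ' mulf_neq0.
have eR : R = B1 * C3.
  by apply: (mulIf nP); rewrite hRP eP; ring.
have eV : V = B1 * C2.
  by apply: (mulfI nQ); rewrite hQV eQ'; ring.
split; first done. split; first done. split; first done.
split; first by rewrite eS eR; ring.
split; first done.
by rewrite eW eV; ring.
Qed.

Lemma main_gen (F : fieldType) (h2 : (2 : F) != 0)
  (a12 a23 a31 b12 b23 b31 c12 c23 c31 : F)
  (a12_3 a23_1 a31_2 b12_3 b23_1 b31_2 c12_3 c23_1 c31_2 : F) :
  a12 != 0 -> a23 != 0 -> a31 != 0 -> b12 != 0 -> b23 != 0 -> b31 != 0 ->
  c12 != 0 -> c23 != 0 -> c31 != 0 ->
  a12_3 != 0 -> a23_1 != 0 -> a31_2 != 0 -> b12_3 != 0 -> b23_1 != 0 ->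
  b31_2 != 0 -> c12_3 != 0 -> c23_1 != 0 -> c31_2 != 0 ->
  b12 * c12 = a12 ^+ 2 -> b23 * c23 = a23 ^+ 2 -> b31 * c31 = a31 ^+ 2 ->
  b12_3 * c12_3 = a12_3 ^+ 2 -> b23_1 * c23_1 = a23_1 ^+ 2 ->
  b31_2 * c31_2 = a31_2 ^+ 2 ->
  b12 + b23 + b31 != 0 ->
  let Sg := b12 + b23 + b31 in
  \rank (corner_matrix
           (S123 a12 a23 a31 b12 b23 b31 c12 c23 c31
                 a12_3 a23_1 a31_2 b12_3 b23_1 b31_2 c12_3 c23_1 c31_2)) = 1%N
  <->
  (a12_3 = a23 * a31 / Sg /\ a23_1 = a31 * a12 / Sg /\ a31_2 = a12 * a23 / Sg /\
   b12_3 = c23 * b31 / Sg /\ b23_1 = c31 * b12 / Sg /\ b31_2 = c12 * b23 / Sg /\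
   c12_3 = b23 * c31 / Sg /\ c23_1 = b31 * c12 / Sg /\ c31_2 = b12 * c23 / Sg).
Proof.
move=> na12 na23 na31 nb12 nb23 nb31 nc12 nc23 nc31 _ _ _ _ _ _ _ _ _
  hb12 hb23 hb31 hb123 hb231 hb312 nS Sg.
rewrite /Sg; clear Sg.
set H := corner_matrix _.
have o0 : (ord0 : 'I_4) = inord 0 by apply/val_inj; rewrite /= inordK.
have e00 : H (inord 0) (inord 0) = - (b12 + b23 + b31) by rewrite /H entryE //=; field.
have h0 : H ord0 ord0 != 0 by rewrite o0 e00 oppr_eq0.
rewrite (@rank1P _ _ H h0); split.
- move=> h.
  have e01 : H (inord 0) (inord 1) = a12 by rewrite /H entryE //=; field.
  have e02 : H (inord 0) (inord 2) = a23 by rewrite /H entryE //=; field.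
  have e03 : H (inord 0) (inord 3) = a31 by rewrite /H entryE //=; field.
  have e10 : H (inord 1) (inord 0) = a12 by rewrite /H entryE //=; field.
  have e20 : H (inord 2) (inord 0) = a23 by rewrite /H entryE //=; field.
  have e30 : H (inord 3) (inord 0) = a31 by rewrite /H entryE //=; field.
  have e11 : H (inord 1) (inord 1) = - c12 + c23_1 + b31_2 by rewrite /H entryE //=; field.
  have e22 : H (inord 2) (inord 2) = b12_3 - c23 + c31_2 by rewrite /H entryE //=; field.
  have e33 : H (inord 3) (inord 3) = c12_3 + b23_1 - c31 by rewrite /H entryE //=; field.
  have e12 : H (inord 1) (inord 2) = - a31_2 by rewrite /H entryE //=; field.
  have e13 : H (inord 1) (inord 3) = - a23_1 by rewrite /H entryE //=; field.
  have e23 : H (inord 2) (inord 3) = - a12_3 by rewrite /H entryE //=; field.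
  have := h (inord 1) (inord 2); rewrite o0 e12 e00 e10 e02 mulrNN => q12.
  have := h (inord 1) (inord 3); rewrite o0 e13 e00 e10 e03 mulrNN => q13.
  have := h (inord 2) (inord 3); rewrite o0 e23 e00 e20 e03 mulrNN => q23.
  have := h (inord 1) (inord 1); rewrite o0 e11 e00 e10 e01 -expr2 -hb12 => q11.
  have := h (inord 2) (inord 2); rewrite o0 e22 e00 e20 e02 -expr2 -hb23 => q22.
  have := h (inord 3) (inord 3); rewrite o0 e33 e00 e30 e03 -expr2 -hb31 => q33.
  have p1 : c23_1 * (b12 + b23 + b31) + b31_2 * (b12 + b23 + b31) = c12 * (b23 + b31).
    by apply: (@from_diff _ (-1) _ _ _ _ q11); ring.
  have p2 : b23_1 * (b12 + b23 + b31) + c12_3 * (b12 + b23 + b31) = c31 * (b12 + b23).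
    by apply: (@from_diff _ (-1) _ _ _ _ q33); ring.
  have p3 : b12_3 * (b12 + b23 + b31) + c31_2 * (b12 + b23 + b31) = c23 * (b12 + b31).
    by apply: (@from_diff _ (-1) _ _ _ _ q22); ring.
  have p4 : b23_1 * (b12 + b23 + b31) * (c23_1 * (b12 + b23 + b31)) = b12 * c12 * b31 * c31.
    transitivity ((b23_1 * c23_1) * ((b12 + b23 + b31) * (b12 + b23 + b31))); first ring.
    rewrite hb231 (_ : a23_1 ^+ 2 * _ = (a23_1 * (b12 + b23 + b31)) ^+ 2); last ring.
    by rewrite q13 exprMn -hb12 -hb31; ring.
  have p5 : b31_2 * (b12 + b23 + b31) * (c31_2 * (b12 + b23 + b31)) = b12 * c12 * b23 * c23.
    transitivity ((b31_2 * c31_2) * ((b12 + b23 + b31) * (b12 + b23 + b31))); first ring.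
    rewrite hb312 (_ : a31_2 ^+ 2 * _ = (a31_2 * (b12 + b23 + b31)) ^+ 2); last ring.
    by rewrite q12 exprMn -hb12 -hb23; ring.
  have p6 : b12_3 * (b12 + b23 + b31) * (c12_3 * (b12 + b23 + b31)) = b23 * c23 * b31 * c31.
    transitivity ((b12_3 * c12_3) * ((b12 + b23 + b31) * (b12 + b23 + b31))); first ring.
    rewrite hb123 (_ : a12_3 ^+ 2 * _ = (a12_3 * (b12 + b23 + b31)) ^+ 2); last ring.
    by rewrite q23 exprMn -hb23 -hb31; ring.
  have [eP [eQ [eR [eS [eV eW]]]]] :=
    @key _ (c23_1 * (b12 + b23 + b31)) (b31_2 * (b12 + b23 + b31))
        (b23_1 * (b12 + b23 + b31)) (c12_3 * (b12 + b23 + b31))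
        (c31_2 * (b12 + b23 + b31)) (b12_3 * (b12 + b23 + b31))
        b12 b23 b31 c12 c23 c31 nb12 nb23 nb31 nS nc12 nc23 nc31
        p1 p2 p3 p4 p5 p6.
  split; first by apply: (mulIf nS); rewrite q23; field.
  split; first by apply: (mulIf nS); rewrite q13; field.
  split; first by apply: (mulIf nS); rewrite q12; field.
  split; first by apply: (mulIf nS); rewrite eW; field.
  split; first by apply: (mulIf nS); rewrite eR; field.
  split; first by apply: (mulIf nS); rewrite eQ; field.
  split; first by apply: (mulIf nS); rewrite eS; field.
  split; first by apply: (mulIf nS); rewrite eP; field.
  by apply: (mulIf nS); rewrite eV; field.
- move=> [ea123 [ea231 [ea312 [eb123 [eb231 [eb312 [ec123 [ec231 ec312]]]]]]]].
  subst a12_3 a23_1 a31_2 b12_3 b23_1 b31_2 c12_3 c23_1 c31_2.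
  have ec12 : c12 = a12 ^+ 2 / b12 by rewrite -hb12; field.
  have ec23 : c23 = a23 ^+ 2 / b23 by rewrite -hb23; field.
  have ec31 : c31 = a31 ^+ 2 / b31 by rewrite -hb31; field.
  subst c12 c23 c31.
  move=> i j; rewrite o0 -(inord_val i) -(inord_val j); move: (ltn_ord i) (ltn_ord j).
  case: (nat_of_ord i) => [|[|[|[|k]]]] //; case: (nat_of_ord j) => [|[|[|[|l]]]] // _ _;
    rewrite /H !entryE //=; field; rewrite ?nb12 ?nb23 ?nb31 ?nS ?h2 //.
Qed.

Theorem theorem11 (R : realType)
  (a12 a23 a31 b12 b23 b31 c12 c23 c31 : R[i])
  (a12_3 a23_1 a31_2 b12_3 b23_1 b31_2 c12_3 c23_1 c31_2 : R[i]) :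
  a12 != 0 -> a23 != 0 -> a31 != 0 -> b12 != 0 -> b23 != 0 -> b31 != 0 ->
  c12 != 0 -> c23 != 0 -> c31 != 0 ->
  a12_3 != 0 -> a23_1 != 0 -> a31_2 != 0 -> b12_3 != 0 -> b23_1 != 0 ->
  b31_2 != 0 -> c12_3 != 0 -> c23_1 != 0 -> c31_2 != 0 ->
  b12 * c12 = a12 ^+ 2 -> b23 * c23 = a23 ^+ 2 -> b31 * c31 = a31 ^+ 2 ->
  b12_3 * c12_3 = a12_3 ^+ 2 -> b23_1 * c23_1 = a23_1 ^+ 2 ->
  b31_2 * c31_2 = a31_2 ^+ 2 ->
  b12 + b23 + b31 != 0 ->
  let Sg := b12 + b23 + b31 in
  \rank (corner_matrix
           (S123 a12 a23 a31 b12 b23 b31 c12 c23 c31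
                 a12_3 a23_1 a31_2 b12_3 b23_1 b31_2 c12_3 c23_1 c31_2)) = 1%N
  <->
  (a12_3 = a23 * a31 / Sg /\ a23_1 = a31 * a12 / Sg /\ a31_2 = a12 * a23 / Sg /\
   b12_3 = c23 * b31 / Sg /\ b23_1 = c31 * b12 / Sg /\ b31_2 = c12 * b23 / Sg /\
   c12_3 = b23 * c31 / Sg /\ c23_1 = b31 * c12 / Sg /\ c31_2 = b12 * c23 / Sg).
Proof.
have h2 : (2 : R[i]) != 0 by rewrite pnatr_eq0.
exact: (@main_gen _ h2).
Qed.
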